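(* Fix $T>0$. On $\Omega^T=\{Z(T)>0\}$, the random set $\Lambda^T$ is an optional line with respect to the filtration $(\mathcal G_I)_{I\in\mathcal I}$, that is, $\{\Lambda^T\preceq I\}\in\mathcal G_I$ for all stopping lines $I\in\mathcal I$.
   Context: Ulam–Harris labels $U=\bigcup_{n\ge0}\mathbb N^n$, $\mathbb N^0=\{0\}$ (root $0$, omitted in concatenations $xk$); mother $\mathfrak m x$, rank $\mathfrak r x$; $x\preceq y$ iff $x=\mathfrak m^ky$ for some $k\ge0$. Neveu trees: $u\subseteq U$ containing $0$, closed under $\mathfrak m$, children of $x$ labelled $x1,\dots,xn_x$. Branching trees $\Omega=[0,\infty)^2\times\bigcup_u(\{u\}\times(0,\infty)^u)$ with coordinates birth time $\tau$, age $\alpha$, Neveu tree $\gamma$, lengths $L_x$; $\tau_0=\tau$, $\tau_x=\tau_{\mathfrak m x}+L_{\mathfrak m x}$; subtree $\mathcal T_x$ rooted at $x$ (with birth time $\tau_x$ and lengths $L_{xy}$). $Z(t)=\sum_{x\in\gamma}\mathbf 1_{(0,L_x]}(t-\tau_x)$, $Z_x=Z\circ\mathcal T_x$ (defined when $x\in\gamma$). A stopping line is $I\subseteq U$ no two distinct elements of which are $\preceq$-comparable; $\mathcal I$ is the set of stopping lines. For stopping lines $I,I'$, $I\preceq I'$ means every branch of $I'$ has an ancestor-or-self in $I$. For $I\in\mathcal I$, $\mathcal K_I$ is the pruned tree $(\tau,\alpha,\kappa_I,(L_y)_{y\in\kappa_I})$ where $\kappa_I$ is $\gamma$ with all $y\succeq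 x$ for $x\in I\cap\gamma$ removed ($\mathcal K_I$ is the whole tree if $I\cap\gamma=\emptyset$); $\mathcal F_I=\sigma(\mathcal K_I)$ and $\mathcal G_I=\mathcal F_I\vee\sigma(\{Z_x(T)>0\}:x\in I)$. Extant branches $\zeta^T=\{x\in\gamma:\tau_x<T\le\tau_x+L_x\}$; on $\{Z(T)>0\}$, $\lambda^T$ is the $\preceq$-maximal $y$ with $y\preceq x$ for all $x\in\zeta^T$, and $\Lambda^T=\{\lambda^Tk\in\gamma: Z_{\lambda^Tk}(T)>0\}$ (a stopping line, empty iff $Z(T)=1$). *)

(* Defs.v *)
From HB Require Import structures.
From mathcomp Require Import all_boot all_order all_algebra.
From mathcomp Require Import all_classical all_reals all_analysis.
Set Implicit Arguments. Unset Strict Implicit. Unset Printing Implicit Defensive.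
Import Order.TTheory GRing.Theory Num.Theory.
Local Open Scope classical_set_scope.
Local Open Scope ring_scope.

(* Ulam--Harris labels: a label x1...xn is the sequence [:: x1; ...; xn];
   the root 0 is [::]; the child xk is rcons x k; x ⪯ y iff prefix x y. *)
Definition label := seq nat.
Definition ulam (x : label) : Prop := all (fun k => 0 < k)%N x.
Definition anc (x y : label) : Prop := prefix x y.

Definition neveu (g : set label) : Prop :=
  [/\ g [::],
      (forall x, g x -> ulam x),
      (forall x k, g (rcons x k) -> g x) &
      (forall x, g x -> exists n : nat, forall k, g (rcons x k) <-> (0 < k <= n)%N)].

Record rtree (R : realType) := RTree {
  rtau : R; ralpha : R; rgamma : set label; rL : label -> R }.

(* the space Omega of branching trees: L_x > 0 on gamma and the
   (irrelevant) coordinates L_x off gamma are normalized to 0 so that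
   Omega is in bijection with [0,oo)^2 x U_u ({u} x (0,oo)^u). *)
Definition valid (R : realType) (t : rtree R) : Prop :=
  [/\ 0 <= rtau t, 0 <= ralpha t, neveu (rgamma t),
      (forall x, rgamma t x -> 0 < rL t x) &
      (forall x, ~ rgamma t x -> rL t x = 0)].

Record Omega (R : realType) := MkOmega { tr : rtree R; tr_valid : valid tr }.

Definition rtree_gens (R : realType) : set (set (rtree R)) :=
  [set [set t | B (rtau t)] | B in [set B : set R | measurable B]] `|`
  [set [set t | B (ralpha t)] | B in [set B : set R | measurable B]] `|`
  [set [set t | rgamma t x] | x in [set: label]] `|`
  [set A | exists x, exists2 B : set R, measurable B & A = [set t | B (rL t x)]].

Definition rtree_measurable (R : realType) : set (set (rtree R)) :=
  <<s @rtree_gens R >>.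

Definition rbirth (R : realType) (tau : R) (L : label -> R) (x : label) : R :=
  tau + \sum_(i < size x) L (take i x).

Definition Zraw (R : realType) (tau : R) (g : set label) (L : label -> R) (t : R)
  : \bar R :=
  \esum_(x in g)
     (if (0 < t - rbirth tau L x) && (t - rbirth tau L x <= L x)
      then 1 else 0)%:E.

Definition birth (R : realType) (w : Omega R) (x : label) : R :=
  rbirth (rtau (tr w)) (rL (tr w)) x.

Definition Z (R : realType) (w : Omega R) (t : R) : \bar R :=
  Zraw (rtau (tr w)) (rgamma (tr w)) (rL (tr w)) t.

(* Z_x = Z o T_x : the subtree rooted at x, birth time tau_x, lengths L_{xy} *)
Definition Zsub (R : realType) (w : Omega R) (x : label) (t : R) : \bar R :=
  Zraw (birth w x) (fun y => rgamma (tr w) (x ++ y)) (fun y => rL (tr w) (x ++ y)) t.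

Definition stopping_line (I : set label) : Prop :=
  (forall x, I x -> ulam x) /\
  (forall x y, I x -> I y -> anc x y -> x = y).

Definition line_le (I I' : set label) : Prop :=
  forall y, I' y -> exists2 x, I x & anc x y.

Definition kappa (R : realType) (I : set label) (w : Omega R) : set label :=
  [set y | rgamma (tr w) y /\ ~ (exists x, [/\ I x, rgamma (tr w) x & anc x y])].

Definition K (R : realType) (I : set label) (w : Omega R) : rtree R :=
  RTree (rtau (tr w)) (ralpha (tr w)) (kappa I w)
        (fun y => if `[< kappa I w y >] then rL (tr w) y else 0).

Definition F_ (R : realType) (I : set label) : set (set (Omega R)) :=
  [set K I @^-1` A | A in @rtree_measurable R].

Definition G_ (R : realType) (T : R) (I : set label) : set (set (Omega R)) :=
  <<s F_ I `|` [set [set w | (0 < Zsub w x T)%E] | x in I] >>.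

Definition zeta (R : realType) (w : Omega R) (T : R) : set label :=
  [set x | rgamma (tr w) x /\ birth w x < T <= birth w x + rL (tr w) x].

Definition is_lambda (R : realType) (w : Omega R) (T : R) (y : label) : Prop :=
  (forall x, zeta w T x -> anc y x) /\
  (forall y', (forall x, zeta w T x -> anc y' x) -> anc y' y).

Definition Lambda (R : realType) (w : Omega R) (T : R) : set label :=
  [set z | exists y k, [/\ is_lambda w T y, z = rcons y k,
                          rgamma (tr w) z & (0 < Zsub w z T)%E]].

(* Main.v *)
Require Import Defs.
From HB Require Import structures.
From mathcomp Require Import all_boot all_order all_algebra.
From mathcomp Require Import all_classical all_reals all_analysis.
From mathcomp Require Import measurable_realfun measurable_fun_approximation.
Import Order.TTheory GRing.Theory Num.Theory.
Local Open Scope classical_set_scope.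
Local Open Scope ring_scope.
Set Implicit Arguments. Unset Strict Implicit.

Lemma prefix_cmp (x q a : label) : prefix x a -> prefix q a -> prefix x q \/ prefix q x.
Proof.
move=> hx hq.
have ex : take (size x) a = x by apply/eqP; rewrite -prefixE.
have eq : take (size q) a = q by apply/eqP; rewrite -prefixE.
have [le|le] := leqP (size x) (size q).
  left; rewrite prefixE -eq take_takel // ex //.
right; rewrite prefixE -ex take_takel ?(ltnW le) // eq //.
Qed.

Lemma prefix_antisym (x y : label) : prefix x y -> prefix y x -> x = y.
Proof.
move=> h1 h2; have s1 := size_prefix h1; have s2 := size_prefix h2.
move: h1; rewrite prefixE (_ : size x = size y); last by apply/eqP; rewrite eqn_leq s1 s2.
by rewrite take_size => /eqP.
Qed.

Lemma prefix_rconsE (x p : label) k : prefix x (rcons p k) -> x = rcons p k \/ prefix x p.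
Proof.
move=> h; have [hp|] := prefix_cmp h (prefix_rcons p k); first by right.
move=> /prefixP [s ex]; move: h; rewrite ex => /prefixP [t]; clear ex x.
rewrite -cats1 -catA => /(congr1 (drop (size p))); rewrite !drop_size_cat //.
case: s => [|a s] /=; first by right; rewrite cats0 prefix_refl.
case: s => [|b s] /=; last by case.
by case=> -> _; left; rewrite cats1.
Qed.

Lemma prefix_strict (p y : label) : prefix p y -> ~ prefix y p -> exists j, prefix (rcons p j) y.
Proof.
move=> /prefixP [s ->]; case: s => [|j s]; first by rewrite cats0 prefix_refl.
by move=> _; exists j; rewrite -cat_rcons prefix_prefix.
Qed.

Lemma neveu_prefix (g : set label) z a : neveu g -> g a -> prefix z a -> g z.
Proof.
case=> _ _ hc _ ga /prefixP [s]; elim/last_ind: s a ga => [|s k IH] a ga ea; subst a.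
  by rewrite cats0 in ga.
by apply: (IH (z ++ s)) => //; apply: (hc _ k); rewrite rcons_cat.
Qed.

Lemma esum_ind_pos (R : realType) (S : set label) (b : label -> bool) :
  (0 < \esum_(x in S) (if b x then (1:R) else 0)%:E)%E <-> exists x, S x /\ b x.
Proof.
split.
  move=> h; apply: contrapT => hn; move: h; rewrite esum1 ?ltxx // => x Sx.
  by case: ifP => // bx; exfalso; apply: hn; exists x.
case=> x [Sx bx]; apply: (@lt_le_trans _ _ 1%E) => //.
apply: esum_ge; exists [set x].
  by split; [exact: finite_set1| move=> y ->].
by rewrite fsbig_set1 bx.
Qed.

Lemma rbirth_cat (R : realType) (tau : R) L (x y : label) :
  rbirth (rbirth tau L x) (fun z => L (x ++ z)) y = rbirth tau L (x ++ y).
Proof.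
rewrite /rbirth -addrA; congr (_ + _).
rewrite size_cat big_split_ord /=; congr (_ + _).
  by apply: eq_bigr => i _; rewrite takel_cat // ltnW.
by apply: eq_bigr => i _; rewrite take_cat ltnNge leq_addr /= addKn.
Qed.

Lemma cond_iff (R : realType) (T b L : R) :
  ((0 < T - b) && (T - b <= L)) = (b < T <= b + L).
Proof. by rewrite subr_gt0 lerBlDl. Qed.

Lemma Z_pos (R : realType) (w : Omega R) T : (0 < Z w T)%E <-> exists a, zeta w T a.
Proof.
rewrite /Z /Zraw esum_ind_pos; split; case=> a [ga c]; exists a.
  by split => //; rewrite -cond_iff.
by split => //; rewrite cond_iff.
Qed.

Lemma Zsub_pos (R : realType) (w : Omega R) x T :
  (0 < Zsub w x T)%E <-> exists a, zeta w T a /\ prefix x a.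
Proof.
rewrite /Zsub /Zraw esum_ind_pos; split.
  case=> y [ga c]; exists (x ++ y); split; last exact: prefix_prefix.
  by split => //; rewrite -cond_iff /birth -rbirth_cat.
case=> a [[ga c] /prefixP [y ea]]; subst a; exists y; split => //.
by rewrite /birth rbirth_cat cond_iff.
Qed.

Section Inst.
Variable R : realType.
HB.instance Definition _ := gen_eqMixin (rtree R).
HB.instance Definition _ := gen_choiceMixin (rtree R).
HB.instance Definition _ := isPointed.Build (rtree R) (RTree 0 0 set0 (fun _ => 0)).

Lemma valid0 : valid (RTree (0:R) 0 [set [::]] (fun x => if x == [::] then 1 else 0)).
Proof.
split => //=.
- split => //=.
  + by move=> x ->.
  + by move=> x k; case: x.
  + move=> x ->; exists 0%N => k; split.
      by rewrite /=; case.
    by case: k.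
- by move=> x ->.
- by move=> x /eqP /negbTE ->.
Qed.
HB.instance Definition _ := gen_eqMixin (Omega R).
HB.instance Definition _ := gen_choiceMixin (Omega R).
HB.instance Definition _ := isPointed.Build (Omega R) (MkOmega valid0).
End Inst.

Section Meas.
Variables (R : realType) (T : R) (I : set label).
Definition Gset : set (set (Omega R)) := F_ I `|` [set [set w | (0 < Zsub w x T)%E] | x in I].
Local Notation GT := (g_sigma_algebraType Gset).
Local Notation RT := (g_sigma_algebraType (@rtree_gens R)).

Lemma mG (A : set (Omega R)) : @measurable _ GT A -> G_ T I A.
Proof. by []. Qed.

Lemma mrL y : measurable_fun setT (fun t : RT => rL t y).
Proof.
move=> _ B mB; rewrite setTI; apply: sub_gen_smallest; right; exists y; exists B => //.
Qed.

Lemma mrtau : measurable_fun setT (fun t : RT => rtau t).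
Proof.
move=> _ B mB; rewrite setTI; apply: sub_gen_smallest; left; left; left; exists B => //.
Qed.

Lemma mgamma y : @measurable _ RT [set t | rgamma t y].
Proof. by apply: sub_gen_smallest; left; right; exists y. Qed.

Lemma mrbirth a : measurable_fun setT (fun t : RT => rbirth (rtau t) (rL t) a).
Proof.
apply: measurable_funD; first exact: mrtau.
by apply: measurable_sum => i; exact: mrL.
Qed.

Definition ExtK a := [set w : Omega R | kappa I w a /\ zeta w T a].
Definition Xa a := [set t : rtree R | rgamma t a /\
   rbirth (rtau t) (rL t) a < T <= rbirth (rtau t) (rL t) a + rL t a].

Lemma prefix_take' (a : label) i : prefix (take i a) a.
Proof. by apply/prefixP; exists (drop i a); rewrite cat_take_drop. Qed.

Lemma kappa_prefix (w : Omega R) a y : kappa I w a -> prefix y a -> kappa I w y.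
Proof.
case=> ga nx ya; split.
  by case: (tr_valid w) => _ _ hn _ _; exact: neveu_prefix hn ga ya.
case=> x [Ix gx xy]; apply: nx; exists x; split => //; exact: prefix_trans xy ya.
Qed.

Lemma ExtK_eq a : ExtK a = K I @^-1` Xa a.
Proof.
apply/seteqP; split => w /=.
- case=> ka [ga c]; split => //.
  have -> : rbirth (rtau (tr w)) (fun y => if `[< kappa I w y >] then rL (tr w) y else 0) a
            = birth w a.
    rewrite /birth /rbirth; congr (_ + _); apply: eq_bigr => i _.
    by rewrite asboolT //; apply: kappa_prefix ka (prefix_take _ _).
  by rewrite /K /= asboolT.
- case=> ka; have ga : rgamma (tr w) a by case: ka.
  have -> : rbirth (rtau (tr w)) (fun y => if `[< kappa I w y >] then rL (tr w) y else 0) a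
            = birth w a.
    rewrite /birth /rbirth; congr (_ + _); apply: eq_bigr => i _.
    by rewrite asboolT //; apply: kappa_prefix ka (prefix_take _ _).
  by rewrite /K /= asboolT.
Qed.

Lemma mXa a : @measurable _ RT (Xa a).
Proof.
have -> : Xa a = [set t : RT | rgamma t a] `&`
   ((setT `&` (fun t : RT => rbirth (rtau t) (rL t) a) @^-1` `]-oo, T[) `&`
    (setT `&` (fun t : RT => rbirth (rtau t) (rL t) a + rL t a) @^-1` `[T, +oo[)).
  apply/seteqP; split => t /=.
    by case=> g /andP [h1 h2]; rewrite !in_itv /= h1 h2.
  rewrite !in_itv /= => -[g [[_ h1] [_ h2]]]; split => //.
  by rewrite h1; rewrite andbT in h2.
apply: measurableI; first exact: mgamma.
apply: measurableI.
  by apply: mrbirth => //; exact: measurable_itv.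
apply: (measurable_funD (mrbirth a) (mrL a)) => //; exact: measurable_itv.
Qed.

Lemma mExtK a : @measurable _ GT (ExtK a).
Proof.
rewrite ExtK_eq; apply: sub_gen_smallest; left; exists (Xa a) => //.
exact: mXa.
Qed.

Lemma mZp x : I x -> @measurable _ GT [set w | (0 < Zsub w x T)%E].
Proof. by move=> Ix; apply: sub_gen_smallest; right; exists x. Qed.
End Meas.

Section Main.
Variables (R : realType) (T : R) (I : set label).
Hypothesis hI : stopping_line I.
Local Notation GT := (g_sigma_algebraType (Gset T I)).

Definition good q := I q \/ (forall x, I x -> ~ prefix x q).
Definition Sset q := [set w : Omega R | exists a, zeta w T a /\ prefix q a].
Definition Dset q := [set w : Omega R | forall a, zeta w T a -> prefix q a].
Definition Zp x := [set w : Omega R | (0 < Zsub w x T)%E].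

Lemma mbigcup (F : label -> set GT) : (forall i, measurable (F i)) -> measurable (\bigcup_i F i).
Proof. by move=> h; apply: countable_bigcupT_measurable => //; exact: countableP. Qed.

Lemma mbigcap (F : label -> set GT) : (forall i, measurable (F i)) -> measurable (\bigcap_i F i).
Proof.
move=> h; rewrite -(setCK (\bigcap_i F i)) setC_bigcap; apply: measurableC.
by apply: mbigcup => i; apply: measurableC.
Qed.

Lemma mcond (P : Prop) (A : set GT) : (P -> measurable A) -> measurable [set w | P /\ A w].
Proof.
move=> h; case: (pselect P) => p.
  have -> : [set w | P /\ A w] = A by apply/seteqP; split => w //= [].
  exact: h.
have -> : [set w | P /\ A w] = set0 by apply/seteqP; split => w //= [].
exact: measurable0.
Qed.

Lemma zeta_split (w : Omega R) a : zeta w T a ->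
  kappa I w a \/ exists x, [/\ I x, prefix x a & Zp x w].
Proof.
move=> za; case: (pselect (kappa I w a)) => ka; first by left.
right; have ga : rgamma (tr w) a by case: za.
case: (pselect (exists x, [/\ I x, rgamma (tr w) x & anc x a])); last first.
  by move=> nx; exfalso; apply: ka; split.
case=> x [Ix gx xa]; exists x; split => //.
by apply/Zsub_pos; exists a.
Qed.

Lemma good_anc q x a : good q -> I x -> prefix x a -> prefix q a -> prefix q x.
Proof.
move=> gq Ix xa qa; have [xq|//] := prefix_cmp xa qa.
case: gq => [Iq|fq]; last by exfalso; exact: fq Ix xq.
by rewrite (hI.2 x q Ix Iq xq) prefix_refl.
Qed.

Lemma mS q : good q -> @measurable _ GT (Sset q).
Proof.
move=> gq.
have -> : Sset q = \bigcup_(a : label) [set w | prefix q a /\ ExtK T I a w] `|`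
   \bigcup_(x : label) [set w | (I x /\ prefix q x) /\ Zp x w].
  apply/seteqP; split => w /=.
    case=> a [za qa]; have [ka|[x [Ix xa zx]]] := zeta_split za.
      by left; exists a.
    by right; exists x => //; split => //; split => //; exact: good_anc xa qa.
  case=> -[b _].
    by case=> qb [_ zb]; exists b.
  case=> -[Ib qb] /Zsub_pos [a [za ba]]; exists a; split => //; exact: prefix_trans qb ba.
apply: measurableU; apply: mbigcup => i; apply: mcond => h.
  exact: mExtK.
exact: (@mZp R T I i h.1).
Qed.

Lemma mD q : good q -> @measurable _ GT (Dset q).
Proof.
move=> gq.
have -> : Dset q = ~` (\bigcup_(a : label) [set w | ~ prefix q a /\ ExtK T I a w] `|`
   \bigcup_(x : label) [set w | (I x /\ ~ prefix q x) /\ Zp x w]).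
  apply/seteqP; split => w /=.
    move=> hD; case.
      by case=> a _ [nqa [_ za]]; apply: nqa; exact: hD.
    case=> x _ [[Ix nqx] /Zsub_pos [a [za xa]]]; apply: nqx.
    exact: good_anc xa (hD a za).
  move=> hn a za; apply: contrapT => nqa; apply: hn.
  have [ka|[x [Ix xa zx]]] := zeta_split za.
    by left; exists a.
  right; exists x => //; split => //; split => // qx; apply: nqa.
  exact: prefix_trans qx xa.
apply: measurableC; apply: measurableU; apply: mbigcup => i; apply: mcond => h.
  exact: mExtK.
exact: (@mZp R T I i h.1).
Qed.

Lemma good_of_I y z : I y -> prefix z y -> good z.
Proof.
move=> Iy zy; case: (pselect (I z)) => Iz; first by left.
right=> x Ix xz; apply: Iz.
have xy := hI.2 x y Ix Iy (prefix_trans xz zy); subst x.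
by rewrite (prefix_antisym zy xz).
Qed.

Lemma good_parent p k : good (rcons p k) -> forall x, I x -> ~ prefix x p.
Proof.
case=> [Ir|fr] x Ix xp.
  have e := hI.2 x (rcons p k) Ix Ir (prefix_trans xp (prefix_rcons p k)); subst x.
  by have := size_prefix xp; rewrite size_rcons ltnn.
exact: fr Ix (prefix_trans xp (prefix_rcons p k)).
Qed.

Lemma good_child p j : (forall x, I x -> ~ prefix x p) -> good (rcons p j).
Proof.
move=> fp; case: (pselect (I (rcons p j))) => Ir; first by left.
right=> x Ix /prefix_rconsE [e|xp]; last exact: fp Ix xp.
by subst x.
Qed.

Lemma Lam_eq p k : [set w : Omega R | Lambda w T (rcons p k)] =
  Dset p `&` (\bigcap_(j : nat) ~` Dset (rcons p j)) `&` Sset (rcons p k).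
Proof.
apply/seteqP; split => w /=.
  case=> y [k' [[hD hmax] e gz zp]]; move: e => /rcons_inj [ey ek]; subst y k'.
  split; [split => //|].
    move=> j _ hDj; have := size_prefix (hmax _ hDj).
    by rewrite size_rcons ltnn.
  by apply/Zsub_pos.
case=> -[hD hnD] hS; exists p, k; split => //.
- split => // y' hy'.
  case: hS => a0 [za0 za]; have pa := hD a0 za0; have ya := hy' a0 za0.
  have [//|py] := prefix_cmp ya pa.
  case: (pselect (prefix y' p)) => [//|nyp].
  have [j pj] := prefix_strict py nyp.
  exfalso; apply: (hnD j Logic.I) => a za'; exact: prefix_trans pj (hy' a za').
- case: hS => a0 [[ga0 _] za].
  by case: (tr_valid w) => _ _ hn _ _; exact: neveu_prefix hn ga0 za.
- by apply/Zsub_pos.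
Qed.

Lemma mLam y z : I y -> prefix z y -> @measurable _ GT [set w | Lambda w T z].
Proof.
move=> Iy zy; have gz := good_of_I Iy zy.
case/lastP: z zy gz => [|p k] _ gz.
  rewrite (_ : [set w | Lambda w T [::]] = set0); first exact: measurable0.
  apply/seteqP; split => w //= [y' [k' [_ e _ _]]].
  by move: e; case: y'.
rewrite Lam_eq; have fp := good_parent gz.
apply: measurableI; first apply: measurableI.
- by apply: mD; right.
- by apply: bigcapT_measurable => j; apply: measurableC; apply: mD; exact: good_child.
- exact: mS.
Qed.

Lemma main_eq : [set w : Omega R | (0 < Z w T)%E /\ line_le (Lambda w T) I] =
  Sset [::] `&` \bigcap_(y : label) [set w | I y -> exists2 z, Lambda w T z & anc z y].
Proof.
apply/seteqP; split => w /=.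
  case=> /Z_pos [a za] hl; split; first by exists a; split => //; exact: prefix0s.
  by move=> y _ /= Iy; exact: hl Iy.
case=> -[a [za _]] hl; split; first by apply/Z_pos; exists a.
by move=> y Iy; exact: hl y Logic.I Iy.
Qed.

Lemma main_meas : @measurable _ GT [set w : Omega R | (0 < Z w T)%E /\ line_le (Lambda w T) I].
Proof.
rewrite main_eq; apply: measurableI.
  apply: mS; case: (pselect (I [::])) => I0; first by left.
  by right => x Ix; rewrite prefixs0 => /eqP e; subst x.
apply: mbigcap => y.
case: (pselect (I y)) => Iy; last first.
  rewrite (_ : [set w | _] = setT); first exact: measurableT.
  by apply/seteqP; split => w //= _ /Iy.
rewrite (_ : [set w | _] = \bigcup_(z : label) [set w | prefix z y /\ Lambda w T z]).
  by apply: mbigcup => z; apply: mcond => zy; exact: mLam Iy zy.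
apply/seteqP; split => w /=.
  by move=> /(_ Iy) [z lz zy]; exists z.
by case=> z _ [zy lz] _; exists z.
Qed.

End Main.

Theorem lemma3 (R : realType) (T : R) (hT : 0 < T) (I : set label)
  (hI : stopping_line I) :
  G_ T I [set w : Omega R | (0 < Z w T)%E /\ line_le (Lambda w T) I].
Proof. exact: (mG (@main_meas R T I hI)). Qed.
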